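(* For any linearizable sketch and any $\lambda>0$, \[ H(\mathbf Y_{[\lambda]})=\sum_{i}\dot H(p_i\lambda)\,\Pr\big(\phi(Y_{0,\lambda},\dots,Y_{i-1,\lambda})=0\big),\qquad \lambda^2 I_{\mathbf Y}(\lambda)=\sum_{i}\dot I(p_i\lambda)\,\Pr\big(\phi(Y_{0,\lambda},\dots,Y_{i-1,\lambda})=0\big), \] the sums ranging over all cell indices $i$.
   Context: Dartboard model: the unit square is partitioned into a finite or countable sequence of cells $c_0,c_1,\dots$ with sizes (areas) $p_i>0$, $\sum_ip_i=1$. Darts arrive according to a Poisson process of rate 1 in time, each landing uniformly; thus at time (cardinality) $\lambda$ the numbers of darts in the cells are independent $\mathrm{Poisson}(p_i\lambda)$ variables. Let $Z_{i,\lambda}$ be the indicator that $c_i$ has been hit by time $\lambda$. A linearizable sketch is given by a function $\phi:\{0,1\}^*\to\{0,1\}$ on finite binary strings that is monotone (coordinatewise $y\le y'$ of equal length implies $\phi(y)\le\phi(y')$), and the cell-occupancy indicators are defined recursively by $Y_{i,\lambda}=Z_{i,\lambda}\vee\phi(Y_{0,\lambda},\dots,Y_{i-1,\lambda})$ (with $\phi$ of the empty string for $i=0$). The state at time $\lambda$ is $\mathbf Y_{[\lambda]}=(Y_{0,\lambda},Y_{1,\lambda},\dots)$; $H(\mathbf Y_{[\lambda]})$ is its Shannon entropy in bits and $I_{\mathbf Y}(\lambda)$ the Fisher information of $\lambda$ with respect to it (standard regularity assumed). $\dot H(t)=\frac{1}{\ln2}\big(te^{-t}-(1-e^{-t})\ln(1-e^{-t})\big)$,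 $\dot I(t)=\frac{t^2}{e^t-1}$. *)

(* Defs.v *)
From mathcomp Require Import all_boot all_order all_algebra.
From mathcomp Require Import all_classical all_reals all_analysis.
Set Implicit Arguments. Unset Strict Implicit. Unset Printing Implicit Defensive.
Import Order.TTheory GRing.Theory Num.Theory.
Local Open Scope ring_scope.

Section Dartboard.
Variable R : realType.

Definition log2 (x : R) : R := ln x / ln 2.

Definition Hdot (t : R) : R :=
  (t * expR (- t) - (1 - expR (- t)) * ln (1 - expR (- t))) / ln 2.
Definition Idot (t : R) : R := t ^+ 2 / (expR t - 1).

Definition monotone_sketch (phi : seq bool -> bool) : Prop :=
  forall y y' : seq bool, size y = size y' ->
    (forall i, (i < size y)%N -> (nth false y i <= nth false y' i)%O) ->
    (phi y <= phi y')%O.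

(* Cell occupancy from hit indicators z = (Z_0,...,Z_{n-1}):
   Y_i = Z_i || phi (Y_0,...,Y_{i-1}). *)
Definition Ystate (phi : seq bool -> bool) (z : seq bool) : seq bool :=
  foldl (fun ys zi => rcons ys (zi || phi ys)) [::] z.

(* Law of Z_i: hit by time lam with probability 1 - exp(-p_i lam)
   (Poisson(p_i lam) number of darts, independent across cells). *)
Definition bern (mu : R) (b : bool) : R :=
  if b then 1 - expR (- mu) else expR (- mu).

Definition Pz (n : nat) (p : nat -> R) (lam : R) (z : n.-tuple bool) : R :=
  \prod_(i < n) bern (p i * lam) (tnth z i).

Definition PY (n : nat) (p : nat -> R) (phi : seq bool -> bool) (lam : R)
    (y : n.-tuple bool) : R :=
  \sum_(z : n.-tuple bool | Ystate phi z == tval y) Pz p lam z.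

Definition HY (n : nat) (p : nat -> R) (phi : seq bool -> bool) (lam : R) : R :=
  - \sum_(y : n.-tuple bool | PY p phi lam y != 0)
      PY p phi lam y * log2 (PY p phi lam y).

Definition IY (n : nat) (p : nat -> R) (phi : seq bool -> bool) (lam : R) : R :=
  \sum_(y : n.-tuple bool | PY p phi lam y != 0)
      (derive1 (fun l => PY p phi l y) lam) ^+ 2 / PY p phi lam y.

Definition PrNotPhi (n : nat) (p : nat -> R) (phi : seq bool -> bool) (lam : R)
    (i : nat) : R :=
  \sum_(z : n.-tuple bool) Pz p lam z * (~~ phi (take i (Ystate phi z)))%:R.

(* Countable case: entropy / Fisher information of the whole sequence,
   as the limits (= suprema, they are nondecreasing) over finite prefixes *)
Definition HYinf (p : nat -> R) (phi : seq bool -> bool) (lam : R) : \bar R :=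
  ereal_sup (range (fun m : nat => (@HY m p phi lam)%:E)).
Definition IYinf (p : nat -> R) (phi : seq bool -> bool) (lam : R) : \bar R :=
  ereal_sup (range (fun m : nat => (@IY m p phi lam)%:E)).

End Dartboard.

(* Main.v *)
Require Import Defs.
From mathcomp Require Import all_boot all_order all_algebra.
From mathcomp Require Import all_classical all_reals all_analysis.
From mathcomp Require Import ring lra.
Set Implicit Arguments. Unset Strict Implicit. Unset Printing Implicit Defensive.
Import Order.TTheory GRing.Theory Num.Theory numFieldNormedType.Exports.
Local Open Scope classical_set_scope.
Local Open Scope ring_scope.

Section Aux.
Variable T : finType.

Definition front n (t : n.+1.-tuple T) : n.-tuple T :=
  belast_tuple (thead t) (behead_tuple t).
Definition lastt n (t : n.+1.-tuple T) : T := last (thead t) (behead t).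

Lemma front_lastK n (t : n.+1.-tuple T) : rcons_tuple (front t) (lastt t) = t.
Proof.
apply: val_inj => /=; rewrite /lastt -lastI.
by case: t => [[|x s] //= _].
Qed.

Lemma rcons_frontK n (u : n.-tuple T) b :
  front (rcons_tuple u b) = u /\ lastt (rcons_tuple u b) = b.
Proof.
have H : rcons (belast (thead (rcons_tuple u b)) (behead (rcons_tuple u b)))
   (last (thead (rcons_tuple u b)) (behead (rcons_tuple u b))) = rcons u b.
  rewrite -lastI /=.
  by case: u => [[|x s] _] //=.
move/rcons_inj: H => [H1 H2]; split => //; exact: val_inj.
Qed.

Lemma sum_rcons (V : nmodType) n (F : n.+1.-tuple T -> V) :
  \sum_(t : n.+1.-tuple T) F t =
  \sum_(u : n.-tuple T) \sum_(b : T) F (rcons_tuple u b).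
Proof.
rewrite pair_bigA /=.
rewrite (reindex (fun ub : n.-tuple T * T => rcons_tuple ub.1 ub.2)) /=; last first.
  exists (fun t => (front t, lastt t)) => [[u b] _|t _] /=.
    by case: (rcons_frontK u b) => -> ->.
  exact: front_lastK.
by apply: eq_bigr => -[u b].
Qed.

Lemma sum_tuple0 (V : nmodType) (F : 0.-tuple T -> V) :
  \sum_(t : 0.-tuple T) F t = F [tuple].
Proof.
rewrite (big_pred1 [tuple]) // => t /=; rewrite (tuple0 t); symmetry; exact: eqxx.
Qed.
End Aux.

Section Main.
Variables (R : realType) (p : nat -> R) (phi : seq bool -> bool).

Lemma Ystate_rcons z b :
  Ystate phi (rcons z b) = rcons (Ystate phi z) (b || phi (Ystate phi z)).
Proof. by rewrite /Ystate foldl_rcons. Qed.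

Lemma size_Ystate z : size (Ystate phi z) = size z.
Proof.
elim/last_ind: z => [//|z b IH]; by rewrite Ystate_rcons !size_rcons IH.
Qed.

Lemma Pz_rcons n l (u : n.-tuple bool) b :
  Pz p l (rcons_tuple u b) = Pz p l u * bern (p n * l) b.
Proof.
rewrite /Pz big_ord_recr /=; congr (_ * _).
  apply: eq_bigr => i _; rewrite !(tnth_nth false) /= nth_rcons size_tuple.
  by rewrite ltn_ord.
by rewrite (tnth_nth false) /= nth_rcons size_tuple ltnn eqxx.
Qed.

Definition q n l (y : seq bool) (c : bool) : R :=
  if phi y then (c%:R) else bern (p n * l) c.

Lemma PY_rcons n l (y : n.-tuple bool) c :
  PY p phi l (rcons_tuple y c) = PY p phi l y * q n l y c.
Proof.
rewrite /PY big_mkcond sum_rcons big_distrl /= [RHS]big_mkcond /=.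
apply: eq_bigr => u _.
under eq_bigr => b _ do rewrite Ystate_rcons eqseq_rcons Pz_rcons.
case: eqP => [->|_]; last by rewrite big1.
rewrite big_bool /= /q; case: (phi y); case: c => /=; rewrite /bern; ring.
Qed.

Lemma bern_ge0 (mu : R) b : 0 <= mu -> 0 <= bern mu b.
Proof.
move=> h; case: b; rewrite /bern ?expR_ge0 // subr_ge0 expR_le1 oppr_le0 //.
Qed.

Lemma PY_ge0 n l (y : n.-tuple bool) :
  (forall i, (i < n)%N -> 0 <= p i) -> 0 <= l -> 0 <= PY p phi l y.
Proof.
move=> hp hl; apply: sumr_ge0 => z _; apply: prodr_ge0 => i _.
by apply: bern_ge0; apply: mulr_ge0 => //; apply: hp.
Qed.

Lemma q_ge0 n l y c : 0 <= p n * l -> 0 <= q n l y c.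
Proof. by move=> h; rewrite /q; case: (phi y); [exact: ler0n|exact: bern_ge0]. Qed.

Lemma HYE n l :
  @HY R n p phi l = - \sum_(y : n.-tuple bool) PY p phi l y * log2 (PY p phi l y).
Proof.
rewrite /HY big_mkcond; congr (- _); apply: eq_bigr => y _.
by have [->|_] := eqVneq (PY p phi l y) 0; rewrite ?mul0r.
Qed.

Lemma mulrlog (a b : R) : 0 <= a -> 0 <= b ->
  a * b * log2 (a * b) = a * b * (log2 a + log2 b).
Proof.
move=> ha hb; have [->|a0] := eqVneq a 0; first by rewrite !mul0r.
have [->|b0] := eqVneq b 0; first by rewrite !mulr0 !mul0r.
rewrite /log2 lnM ?mulrDl // posrE lt0r ?a0 ?b0 //.
Qed.

Lemma PY0 l (y : 0.-tuple bool) : PY p phi l y = 1.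
Proof.
by rewrite /PY big_mkcond sum_tuple0 /= (tuple0 y) /= /Pz big_ord0.
Qed.

Lemma HY_step n l : (forall i, (i <= n)%N -> 0 < p i) -> 0 < l ->
  @HY R n.+1 p phi l = @HY R n p phi l +
    Hdot (p n * l) * \sum_(y : n.-tuple bool) PY p phi l y * (~~ phi y)%:R.
Proof.
move=> hp hl.
have hpl : 0 < p n * l by apply: mulr_gt0 => //; exact: hp.
rewrite !HYE sum_rcons.
under eq_bigr => y _ do under eq_bigr => c _ do rewrite PY_rcons.
have key : forall y : n.-tuple bool,
  \sum_(c : bool) PY p phi l y * q n l y c * log2 (PY p phi l y * q n l y c)
  = PY p phi l y * log2 (PY p phi l y) - Hdot (p n * l) * (PY p phi l y * (~~ phi y)%:R).
  move=> y.
  have hy : 0 <= PY p phi l y.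
    apply: PY_ge0 => [i hi|]; [apply: ltW; apply: hp; exact: ltnW|exact: ltW].
  rewrite big_bool !mulrlog ?q_ge0 ?(ltW hpl) //.
  rewrite /q; case: (phi y) => /=; rewrite ?mulr1n ?mulr0n /log2 ?ln1.
    ring.
  rewrite /bern /Hdot expRK; ring.
rewrite (eq_bigr _ (fun y _ => key y)) sumrB mulr_sumr opprB addrC.
done.
Qed.


Definition dq n x (y : seq bool) (c : bool) : R :=
  if phi y then 0 else
  (if c then p n * expR (- (p n * x)) else - (p n * expR (- (p n * x)))).

Lemma expm_derive (a x : R) :
  is_derive x 1 (fun l => expR (- (a * l))) (- (a * expR (- (a * x)))).
Proof.
have h1 : is_derive x 1 (fun l : R => - (a * l)) (- a).
  have -> : (fun l : R => - (a * l)) = (- a) \*: (@id R).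
    by apply/funext => l /=; rewrite scaleNr.
  have := is_deriveZ (- a) (is_derive_id x 1).
  by move=> h; apply: (is_derive_eq h); rewrite /GRing.scale /= mulr1.
have := is_derive1_comp (f := expR) (is_derive_expR _) h1.
by move=> h; apply: (is_derive_eq h); rewrite mulrN mulrC.
Qed.

Lemma q_derive n (x : R) y c : is_derive x 1 (fun l => q n l y c) (dq n x y c).
Proof.
rewrite /q /dq; case: (phi y).
  exact: is_derive_cst.
case: c; rewrite /bern; last exact: expm_derive.
have := is_deriveB (is_derive_cst (1 : R) x 1) (expm_derive (p n) x).
by move=> h; apply: (is_derive_eq h); rewrite sub0r opprK.
Qed.


Lemma PY_derivable n (y : n.-tuple bool) (x : R) :
  derivable (fun l => PY p phi l y) x 1.
Proof.
elim: n y => [y|n IH y].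
  have -> : (fun l => PY p phi l y) = cst 1 by apply/funext => l; rewrite PY0.
  exact: derivable_cst.
rewrite -(front_lastK y).
have -> : (fun l => PY p phi l (rcons_tuple (front y) (lastt y))) =
  (fun l => PY p phi l (front y)) * (fun l => q n l (front y) (lastt y)).
  by apply/funext => l; rewrite PY_rcons.
apply: derivableM; first exact: IH.
apply: ex_derive; exact: q_derive.
Qed.

Lemma derive1_rcons n (y : n.-tuple bool) c (x : R) :
  derive1 (fun l => PY p phi l (rcons_tuple y c)) x =
  derive1 (fun l => PY p phi l y) x * q n x y c + PY p phi x y * dq n x y c.
Proof.
have -> : (fun l => PY p phi l (rcons_tuple y c)) =
  (fun l => PY p phi l y) * (fun l => q n l y c).
  by apply/funext => l; rewrite PY_rcons.
rewrite !derive1E deriveM; last 2 first.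
- exact: PY_derivable.
- apply: ex_derive; exact: q_derive.
have hq := q_derive n x y c.
rewrite derive_val.
by rewrite /GRing.scale /= addrC [q _ _ _ _ * _]mulrC.
Qed.


Lemma IYE n l : @IY R n p phi l =
  \sum_(y : n.-tuple bool) (derive1 (fun x => PY p phi x y) l) ^+ 2 / PY p phi l y.
Proof.
rewrite /IY big_mkcond; apply: eq_bigr => y _.
by have [->|_] := eqVneq (PY p phi l y) 0; rewrite ?invr0 ?mulr0.
Qed.

Lemma IY_step n l : (forall i, (i <= n)%N -> 0 < p i) -> 0 < l ->
  l ^+ 2 * @IY R n.+1 p phi l = l ^+ 2 * @IY R n p phi l +
    Idot (p n * l) * \sum_(y : n.-tuple bool) PY p phi l y * (~~ phi y)%:R.
Proof.
move=> hp hl.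
have hpl : 0 < p n * l by apply: mulr_gt0 => //; exact: hp.
rewrite !IYE sum_rcons.
under eq_bigr => y _ do under eq_bigr => c _ do rewrite derive1_rcons PY_rcons.
have key : forall y : n.-tuple bool,
  l ^+ 2 * \sum_(c : bool)
    (derive1 (fun x => PY p phi x y) l * q n l y c + PY p phi l y * dq n l y c) ^+ 2
     / (PY p phi l y * q n l y c)
  = l ^+ 2 * ((derive1 (fun x => PY p phi x y) l) ^+ 2 / PY p phi l y)
    + Idot (p n * l) * (PY p phi l y * (~~ phi y)%:R).
  move=> y.
  set D := derive1 _ l; set P := PY p phi l y.
  rewrite big_bool /q /dq; case: (phi y) => /=; rewrite ?mulr1n ?mulr0n.
    by rewrite !mulr0 !mulr1 !addr0 invr0 !mulr0 addr0.
  have [->|P0] := eqVneq P 0.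
    by rewrite !mul0r !invr0 !mulr0 !addr0 ?mulr0.
  rewrite /bern /Idot expRN.
  have E1 : 1 < expR (p n * l) by rewrite expR_gt1.
  set E := expR (p n * l).
  have E0 : E != 0 by apply: lt0r_neq0; apply: (lt_trans ltr01).
  have E10 : E - 1 != 0 by rewrite subr_eq0 gt_eqF.
  have E20 : 1 - E^-1 != 0.
    by rewrite subr_eq0 eq_sym invr_eq1 ?unitfE // gt_eqF.
  by field; rewrite E10 P0 E0.
rewrite mulr_sumr (eq_bigr _ (fun y _ => key y)) big_split /= -!mulr_sumr.
done.
Qed.

Lemma Yt_proof n (z : n.-tuple bool) : size (Ystate phi z) == n.
Proof. by rewrite size_Ystate size_tuple. Qed.
Definition Yt n (z : n.-tuple bool) : n.-tuple bool := Tuple (Yt_proof z).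

Lemma partition n l (G : seq bool -> R) :
  \sum_(z : n.-tuple bool) Pz p l z * G (Ystate phi z) =
  \sum_(y : n.-tuple bool) PY p phi l y * G y.
Proof.
rewrite /PY; under [RHS]eq_bigr => y _ do rewrite big_distrl big_mkcond /=.
rewrite exchange_big /=; apply: eq_bigr => z _.
rewrite -big_mkcond (big_pred1 (Yt z)) //= => y /=.
Qed.

Lemma PrNot_marg n l i : (i <= n)%N ->
  @PrNotPhi R n.+1 p phi l i = @PrNotPhi R n p phi l i.
Proof.
move=> hi; rewrite /PrNotPhi sum_rcons; apply: eq_bigr => z _.
rewrite big_bool /= !Pz_rcons !Ystate_rcons -!cats1 !takel_cat ?size_Ystate ?size_tuple //.
rewrite /bern; ring.
Qed.

Lemma PrNot_last n l : @PrNotPhi R n.+1 p phi l n =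
  \sum_(y : n.-tuple bool) PY p phi l y * (~~ phi y)%:R.
Proof.
rewrite -(partition n l (fun y => (~~ phi y)%:R)) /PrNotPhi sum_rcons; apply: eq_bigr => z _.
rewrite big_bool /= !Pz_rcons !Ystate_rcons -!cats1 !takel_cat ?size_Ystate ?size_tuple //.
rewrite take_oversize ?size_Ystate ?size_tuple //.
rewrite /bern; ring.
Qed.

Lemma finite_main n l : (forall i, (i < n)%N -> 0 < p i) -> 0 < l ->
  @HY R n p phi l = \sum_(i < n) Hdot (p i * l) * @PrNotPhi R n p phi l i /\
  l ^+ 2 * @IY R n p phi l = \sum_(i < n) Idot (p i * l) * @PrNotPhi R n p phi l i.
Proof.
elim: n => [|n IH] hp hl.
  rewrite HYE IYE !sum_tuple0 PY0 !big_ord0.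
  have -> : (fun x => PY p phi x [tuple]) = cst 1.
    by apply/funext => x; rewrite PY0.
  rewrite derive1_cst /log2 ln1; split; ring.
have hp' : forall i, (i <= n)%N -> 0 < p i by move=> i hi; apply: hp.
have [IH1 IH2] := IH (fun i hi => hp' i (ltnW hi)) hl.
rewrite HY_step // IY_step // !big_ord_recr /= PrNot_last.
rewrite (eq_bigr (fun i : 'I_n => Hdot (p i * l) * @PrNotPhi R n p phi l i)); last first.
  by move=> i _; rewrite PrNot_marg // ltnW.
rewrite [X in _ /\ _ = X + _](eq_bigr (fun i : 'I_n => Idot (p i * l) * @PrNotPhi R n p phi l i)); last first.
  by move=> i _; rewrite PrNot_marg // ltnW.
by rewrite -IH1 -IH2.
Qed.


Lemma PrNot_stable i m l : (i <= m)%N ->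
  @PrNotPhi R m p phi l i = @PrNotPhi R i p phi l i.
Proof.
move=> him; rewrite -(subnKC him); elim: (m - i)%N => [|k IH]; first by rewrite addn0.
by rewrite addnS PrNot_marg ?IH // leq_addr.
Qed.

End Main.

Lemma sup_series (R : realType) (a : nat -> R) : (forall i, 0 <= a i) ->
  ereal_sup (range (fun m => (\sum_(i < m) a i)%:E)) =
  (\sum_(0 <= i <oo) (a i)%:E)%E.
Proof.
move=> a0.
have -> : (fun m => (\sum_(i < m) a i)%:E) = (fun m => (\sum_(0 <= i < m) (a i)%:E)%E).
  by apply/funext => m; rewrite -sumEFin big_mkord.
apply/esym/cvg_lim => //.
apply: ereal_nondecreasing_cvgn.
apply: ereal_nondecreasing_series => n _ _; rewrite lee_fin.
exact: a0.
Qed.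

Lemma Hdot_ge0 (R : realType) (t : R) : 0 < t -> 0 <= Hdot t.
Proof.
move=> ht; rewrite /Hdot; apply: divr_ge0; last first.
  by apply: ltW; apply: ln_gt0; rewrite ltr1n.
rewrite subr_ge0; apply: (@le_trans _ _ 0).
  apply: mulr_ge0_le0; first by rewrite subr_ge0 expR_le1 oppr_le0 ltW.
  by apply: ln_le0; rewrite lerBlDr lerDl expR_ge0.
by apply: mulr_ge0; [exact: ltW|exact: expR_ge0].
Qed.

Lemma Idot_ge0 (R : realType) (t : R) : 0 < t -> 0 <= Idot t.
Proof.
move=> ht; rewrite /Idot; apply: divr_ge0; first exact: sqr_ge0.
by rewrite subr_ge0; apply: ltW; rewrite expR_gt1.
Qed.

Lemma PrNot_ge0 (R : realType) n (p : nat -> R) phi l i :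
  (forall i, 0 < p i) -> 0 < l -> 0 <= @PrNotPhi R n p phi l i.
Proof.
move=> hp hl; apply: sumr_ge0 => z _; apply: mulr_ge0; last exact: ler0n.
apply: prodr_ge0 => j _; apply: bern_ge0; apply: mulr_ge0; apply: ltW => //.
Qed.

Theorem mainTheorem11 (R : realType) :
  (* finitely many cells c_0, ..., c_{n-1} *)
  (forall (n : nat) (p : nat -> R) (phi : seq bool -> bool) (lam : R),
     (forall i, (i < n)%N -> 0 < p i) -> \sum_(i < n) p i = 1 ->
     monotone_sketch phi -> 0 < lam ->
     @HY R n p phi lam =
       \sum_(i < n) Hdot (p i * lam) * @PrNotPhi R n p phi lam i
     /\ lam ^+ 2 * @IY R n p phi lam =
       \sum_(i < n) Idot (p i * lam) * @PrNotPhi R n p phi lam i)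
  /\
  (* countably many cells c_0, c_1, ... *)
  (forall (p : nat -> R) (phi : seq bool -> bool) (lam : R),
     (forall i, 0 < p i) -> series p @ \oo --> (1 : R) ->
     monotone_sketch phi -> 0 < lam ->
     HYinf p phi lam =
       (\sum_(0 <= i <oo) (Hdot (p i * lam) * @PrNotPhi R i p phi lam i)%:E)%E
     /\ ((lam ^+ 2)%:E * IYinf p phi lam =
       \sum_(0 <= i <oo) (Idot (p i * lam) * @PrNotPhi R i p phi lam i)%:E)%E).
Proof.
split.
  by move=> n p phi lam hp _ _ hl; exact: finite_main.
move=> p phi lam hp _ _ hl.
have H m := finite_main phi (n := m) (fun i _ => hp i) hl.
have apos : forall i, 0 < p i * lam by move=> i; apply: mulr_gt0.
split.
  rewrite /HYinf (_ : (fun m => (@HY R m p phi lam)%:E) =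
     (fun m => (\sum_(i < m) Hdot (p i * lam) * @PrNotPhi R i p phi lam i)%:E)).
    apply: sup_series => i; apply: mulr_ge0; first exact: Hdot_ge0.
    exact: PrNot_ge0.
  apply/funext => m; rewrite (H m).1; congr (_%:E); apply: eq_bigr => i _.
  by rewrite PrNot_stable // ltnW.
have l0 : lam ^+ 2 != 0 by rewrite expf_neq0 // gt_eqF.
rewrite /IYinf (_ : (fun m => (@IY R m p phi lam)%:E) =
   (fun m => (\sum_(i < m) (Idot (p i * lam) * @PrNotPhi R i p phi lam i / lam ^+ 2))%:E)).
  rewrite (@sup_series R (fun i => Idot (p i * lam) * @PrNotPhi R i p phi lam i / lam ^+ 2)); last first.
    move=> i; apply: divr_ge0; last exact: sqr_ge0.
    apply: mulr_ge0; first exact: Idot_ge0.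
    exact: PrNot_ge0.
  rewrite -nneseriesZl; last first.
    move=> i _; rewrite lee_fin; apply: divr_ge0; last exact: sqr_ge0.
    apply: mulr_ge0; first exact: Idot_ge0.
    exact: PrNot_ge0.
  apply: eq_eseriesr => i _; rewrite -EFinM; congr (_%:E).
  by rewrite mulrC divfK.
apply/funext => m; congr (_%:E).
have -> : \sum_(i < m) Idot (p i * lam) * @PrNotPhi R i p phi lam i / lam ^+ 2 =
  (\sum_(i < m) Idot (p i * lam) * @PrNotPhi R m p phi lam i) / lam ^+ 2.
  rewrite mulr_suml; apply: eq_bigr => i _; by rewrite PrNot_stable // ltnW.
by rewrite -(H m).2 mulrC mulKf.
Qed.
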